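(* Fix integers $i\ge0$ and $0\le a<p$, and use the notation of the context. (a) Define integers $u_1,\dots,u_s$ inductively by $u_1:=\Big\lceil\frac{iq-a}{p+qm_f}\Big\rceil$ and $u_j:=\Big\lceil\frac{u_{j-1}n_{j+1,s}-a'_j}{n_{j,s}}\Big\rceil$ for $1<j\le s$. Then the cycle $z(i):=ib_0+\sum_{j=1}^su_jb_j$ is $\ge0$ and satisfies $(z(i)+l'_{[-ag_s]},b_j)\le0$ for all $j=1,\dots,s$. (b) If a cycle $\bar z(i)=ib_0+\sum_{j=1}^s\bar u_jb_j\ge0$ satisfies $(\bar z(i)+l'_{[-ag_s]},b_j)\le0$ for all $j=1,\dots,s$, then $\bar u_1\ge\Big\lceil\frac{iq-a}{p+qm_f}\Big\rceil$ and $\bar u_j\ge\Big\lceil\frac{\bar u_{j-1}n_{j+1,s}-a'_j}{n_{j,s}}\Big\rceil$ for $1<j\le s$.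
   Context: $f:(\mathbb C^2,0)\to(\mathbb C,0)$ irreducible plane curve germ, singular at $0$; $G(f)$ its minimal embedded good resolution graph with unique $(-1)$-vertex $v_0$ carrying the strict transform; $\bar G$ this graph without the arrow; $m_f$ the vanishing order of $f$ along $E_{v_0}$. $p,q$ coprime positive integers, $p/q=[k_1,\dots,k_s]=k_1-1/(k_2-1/(\cdots-1/k_s))$ with $k_1\ge1$, $k_j\ge2$ ($j\ge2$). $G(M)$ is the graph obtained from $\bar G$ by attaching a chain $v_1,\dots,v_s$ ($v_1$ adjacent to $v_0$) with Euler numbers $-k_1-m_f,-k_2,\dots,-k_s$ (plumbing graph of $S^3_{-p/q}(K_f)$). $L$ is the lattice with basis $b_j$ indexed by the vertices ($b_0\leftrightarrow v_0$, $b_j\leftrightarrow v_j$ for $1\le j\le s$), with the negative definite intersection form $(\,,\,)$ of $G(M)$ (Euler numbers on the diagonal, $1$ for adjacent vertices, $0$ otherwise), extended to $L_{\mathbb Q}=L\otimes\mathbb Q$; $L'=\{x\in L_\mathbb Q:(x,L)\subset\mathbb Z\}$, $g_j\in L'$ the dual basis ($(g_i,b_j)=\delta_{ij}$). $x\ge y$ means all coefficients of $x-y$ are $\ge0$. $S_\mathbb Q=\{x\in L_\mathbb Q:(x,b_j)\le0\ \forall j\}$; $l'_{[-ag_s]}$ is the unique minimal element of $(-ag_s+L)\cap S_\mathbb Q$. For $1\le i\le j\le s$ write $[k_i,\dots,k_j]=n_{ij}/d_{ij}$ with $n_{ij}>0$, $\gcd(n_{ij},d_{ij})=1$; set $n_{i,i-1}:=1$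 and $n_{ij}:=0$ for $j<i-1$. From $a$ define $a_i:=\Big\lfloor\frac{a-\sum_{t=1}^{i-1}n_{t+1,s}a_t}{n_{i+1,s}}\Big\rfloor$ for $1\le i\le s$, and $a'_j:=n_{j+1,s}a_j+n_{j+2,s}a_{j+1}+\cdots+n_{s+1,s}a_s$ for $1\le j\le s$. *)

(* Defs.v *)
From HB Require Import structures.
From mathcomp Require Import all_boot all_order all_algebra.
Unset Printing Implicit Defensive.
Import Order.TTheory GRing.Theory Num.Theory.
Local Open Scope ring_scope.

(* Resolution graphs of irreducible plane curve germs, built by the    *)
(* sequence of point blow-ups along the branch.  Vertices are the nats *)
(* 0 .. rg_n-1; rg_e = Euler numbers (self-intersections); rg_adj =    *)
(* adjacency; rg_last = the last created exceptional curve, on which   *)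
(* the strict transform of the branch lies.                            *)
Record rgraph := RG {
  rg_n : nat; rg_e : nat -> int; rg_adj : nat -> nat -> bool; rg_last : nat }.

(* blow-up of the origin *)
Definition rg_init : rgraph :=
  RG 1 (fun v => if v == 0%N then -1 else 0) (fun _ _ => false) 0.

(* None   : blow up a free point of E_last (on no other E_v);
   Some d : blow up the satellite point E_last \cap E_d. *)
Definition step := option nat.

Definition blowup (G : rgraph) (st : step) : rgraph :=
  let w := rg_n G in let c := rg_last G in
  match st with
  | None => RG w.+1
      (fun v => if v == w then -1 else if v == c then rg_e G v - 1 else rg_e G v)
      (fun u v => [|| rg_adj G u v, (u == c) && (v == w) | (u == w) && (v == c)])
      w
  | Some d => RG w.+1
      (fun v => if v == w then -1
                else if (v == c) || (v == d) then rg_e G v - 1 else rg_e G v)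
      (fun u v => [|| rg_adj G u v && ~~ (((u == c) && (v == d)) || ((u == d) && (v == c))),
                      ((u == c) || (u == d)) && (v == w)
                    | (u == w) && ((v == c) || (v == d))])
      w
  end.

Fixpoint valid_from (G : rgraph) (sts : seq step) : bool :=
  match sts with
  | [::] => true
  | st :: t =>
      (if st is Some d then (d < rg_n G)%N && rg_adj G (rg_last G) d else true)
      && valid_from (blowup G st) t
  end.

Definition build (sts : seq step) : rgraph := foldl blowup rg_init sts.

(* The minimal embedded good resolution of a singular branch: the
   sequence of infinitely near points is stopped right after the last
   satellite point; the strict transform then meets E_{v_0} (= rg_last)
   transversally at a free point. *)
Definition min_res_steps (sts : seq step) : bool :=
  valid_from rg_init sts && (if last None sts is Some _ then true else false).

Definition gbar_form (G : rgraph) (u v : nat) : int :=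
  if u == v then rg_e G u else if rg_adj G u v then 1 else 0.

(* m_f : multiplicity of div(f) along E_{v_0}; div(f) = sum m_v E_v + strict
   transform, and (div f, E_v) = 0 for every exceptional E_v. *)
Definition is_mf (G : rgraph) (mf : int) : Prop :=
  exists mv : nat -> int, mv (rg_last G) = mf /\
    forall v, (v < rg_n G)%N ->
      \sum_(u < rg_n G) mv u * gbar_form G u v + (v == rg_last G)%:R = 0.

Fixpoint cf (l : seq int) : rat :=
  match l with
  | [::] => 0
  | x :: t => if t is [::] then x%:~R else x%:~R - (cf t)^-1
  end.

Definition kseq (k : nat -> int) (i j : nat) : seq int :=
  [seq k t | t <- iota i (j.+1 - i)].

Definition nn (k : nat -> int) (i j : nat) : int :=
  if (i <= j)%N then numq (cf (kseq k i j))
  else if j.+1 == i then 1 else 0.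

Fixpoint alist (k : nat -> int) (s : nat) (a : int) (i : nat) : seq int :=
  match i with
  | 0 => [::]
  | i'.+1 => let l := alist k s a i' in
      rcons l (Num.floor
        (((a - \sum_(t < i') nn k t.+2 s * nth 0 l t)%:~R
           / (nn k i'.+2 s)%:~R) : rat))
  end.

Definition aa (k : nat -> int) (s : nat) (a : int) (i : nat) : int :=
  nth 0 (alist k s a i) i.-1.

Definition aprime (k : nat -> int) (s : nat) (a : int) (j : nat) : int :=
  \sum_(j <= t < s.+1) nn k t.+1 s * aa k s a t.

Definition u1bound (p q : nat) (mf a : int) (i : nat) : int :=
  Num.ceil ((((i * q)%N%:Z - a)%:~R / (p%:Z + q%:Z * mf)%:~R) : rat).

Definition ubound (k : nat -> int) (s : nat) (a : int) (j : nat) (x : int) : int :=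
  Num.ceil (((x * nn k j.+1 s - aprime k s a j)%:~R / (nn k j s)%:~R) : rat).

Fixpoint useq (k : nat -> int) (s p q : nat) (mf a : int) (i j : nat) : int :=
  match j with
  | 0 => 0
  | j'.+1 => if j' is 0 then u1bound p q mf a i
             else ubound k s a j (useq k s p q mf a i j')
  end.

(* The lattice of G(M): vertices = vertices of \bar G (inl) and the    *)
(* chain v_1..v_s (inr t  <->  v_{t+1}).                              *)
Definition Vtx (G : rgraph) (s : nat) : finType := ('I_(rg_n G) + 'I_s)%type.

Definition GMform (G : rgraph) (s : nat) (k : nat -> int) (mf : int)
  (u v : Vtx G s) : int :=
  match u, v with
  | inl x, inl y => gbar_form G x y
  | inl x, inr j | inr j, inl x =>
      if (val x == rg_last G) && (val j == 0%N) then 1 else 0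
  | inr j1, inr j2 =>
      if j1 == j2 then (if val j1 == 0%N then - k 1%N - mf else - k (val j1).+1)
      else if (val j1 == (val j2).+1) || (val j2 == (val j1).+1) then 1 else 0
  end.

Definition bform (G : rgraph) (s : nat) (k : nat -> int) (mf : int)
  (x y : Vtx G s -> rat) : rat :=
  \sum_(u : Vtx G s) \sum_(w : Vtx G s) x u * y w * (GMform G s k mf u w)%:~R.

Definition bvec (G : rgraph) (s : nat) (v : Vtx G s) : Vtx G s -> rat :=
  fun u => (u == v)%:R.

Definition b0 (G : rgraph) (s : nat) : Vtx G s -> rat :=
  fun u => if u is inl x then (val x == rg_last G)%:R else 0.
Definition bchain (G : rgraph) (s : nat) (j : nat) : Vtx G s -> rat :=
  fun u => if u is inr t then ((val t).+1 == j)%:R else 0.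

Definition is_gs (G : rgraph) (s : nat) (k : nat -> int) (mf : int)
  (gs : Vtx G s -> rat) : Prop :=
  forall v : Vtx G s, bform G s k mf gs (bvec G s v) = bchain G s (s) v.

Definition in_coset (G : rgraph) (s : nat) (a : int) (gs x : Vtx G s -> rat) : Prop :=
  exists z : Vtx G s -> int, forall u, x u = - a%:~R * gs u + (z u)%:~R.

Definition in_SQ (G : rgraph) (s : nat) (k : nat -> int) (mf : int)
  (x : Vtx G s -> rat) : Prop :=
  forall v : Vtx G s, bform G s k mf x (bvec G s v) <= 0.

Definition is_lprime (G : rgraph) (s : nat) (k : nat -> int) (mf a : int)
  (gs l : Vtx G s -> rat) : Prop :=
  [/\ in_coset G s a gs l, in_SQ G s k mf l &
      forall y, in_coset G s a gs y -> in_SQ G s k mf y -> forall u, l u <= y u].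

Definition zcyc (G : rgraph) (s : nat) (i : nat) (u : nat -> int) : Vtx G s -> rat :=
  fun v => match v with
           | inl x => if val x == rg_last G then i%:R else 0
           | inr t => (u (val t).+1)%:~R
           end.

(* Main.v *)
Require Import Defs.
From HB Require Import structures.
From mathcomp Require Import all_boot all_order all_algebra.
From mathcomp Require Import zify ring lra.
Import Order.TTheory GRing.Theory Num.Theory.
Local Open Scope ring_scope.

Lemma ceil_div (A B : int) : 0 < B ->
  let c := Num.ceil ((A%:~R / B%:~R) : rat) in A <= c * B /\ c * B < A + B.
Proof.
move=> B0 c; have := ceil_itv ((A%:~R / B%:~R) : rat); rewrite -/c => /andP[h1 h2].
have B0' : (0 : rat) < B%:~R by rewrite ltr0z.
split.
- rewrite -(ler_int rat) intrM -ler_pdivrMr //.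
- rewrite -(ltr_int rat) intrM intrD -ltr_pdivlMr // mulrDl divff ?gt_eqF //.
  by rewrite -ltrBlDr; move: h1; rewrite intrB.
Qed.

Lemma ceil_div_le (A B u : int) : 0 < B -> A <= u * B ->
  Num.ceil ((A%:~R / B%:~R) : rat) <= u.
Proof.
move=> B0 h; rewrite ceil_le_int ler_pdivrMr ?ltr0z // -intrM ler_int //.
Qed.

Lemma floor_div (A B : int) : 0 < B ->
  let f := Num.floor ((A%:~R / B%:~R) : rat) in f * B <= A /\ A < f * B + B.
Proof.
move=> B0 f; have := floor_itv ((A%:~R / B%:~R) : rat); rewrite -/f => /andP[h1 h2].
have B0' : (0 : rat) < B%:~R by rewrite ltr0z.
split.
- rewrite -(ler_int rat) intrM -ler_pdivlMr //.
- have : (A%:~R : rat) < (f+1)%:~R * B%:~R by rewrite -ltr_pdivrMr.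
  by rewrite -intrM ltr_int mulrDl mul1r.
Qed.

Lemma lia_test (p y a : int) : 0 < p -> - (p * y) <= a -> a < p -> 0 <= y.
Proof. move=> *; nia. Qed.

Lemma kseq_cons k i j : (i <= j)%N -> kseq k i j = k i :: kseq k i.+1 j.
Proof. by move=> h; rewrite /kseq subSS subSn. Qed.

Lemma kseq_nil k j : kseq k j.+1 j = [::].
Proof. by rewrite /kseq subnn. Qed.

Lemma numden_eq (N M : int) : 0 < M -> coprime `|N| `|M| ->
  numq (N%:~R / M%:~R) = N /\ denq (N%:~R / M%:~R) = M.
Proof.
move=> M0 co; rewrite coprimeq_num // coprimeq_den // gtr0_sg // mul1r gt_eqF //.
by rewrite gtr0_norm.
Qed.

Lemma cf_step (x : rat) (kj : int) : 0 < x ->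
  numq (kj%:~R - x^-1) = kj * numq x - denq x /\ denq (kj%:~R - x^-1) = numq x.
Proof.
move=> x0.
have n0 : 0 < numq x by rewrite numq_gt0.
have d0 := denq_gt0 x.
have -> : kj%:~R - x^-1 = (kj * numq x - denq x)%:~R / (numq x)%:~R :> rat.
  rewrite -[in LHS](divq_num_den x) invf_div intrB intrM.
  field; by rewrite intr_eq0 gt_eqF.
apply: numden_eq => //.
have := coprime_num_den x; rewrite /coprime => h.
have : gcdz (kj * numq x - denq x) (numq x) = 1.
  by rewrite gcdzC gcdzMDl gcdzN /gcdz (eqP h).
by rewrite /gcdz => /eqP; rewrite eqz_nat.
Qed.

Lemma nn_s1 k s : nn k s.+1 s = 1.
Proof. by rewrite /nn ltnn eqxx. Qed.
Lemma nn_s2 k s : nn k s.+2 s = 0.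
Proof. rewrite /nn. have -> : (s.+2 <= s)%N = false by rewrite ltnNge leqW. have -> : (s.+1 == s.+2) = false by elim: s. by []. Qed.
Lemma nn_le k j s : (j <= s)%N -> nn k j s = numq (cf (kseq k j s)).
Proof. by move=> h; rewrite /nn h. Qed.

Lemma cf_cons k j s : (j < s)%N ->
  cf (kseq k j s) = (k j)%:~R - (cf (kseq k j.+1 s))^-1.
Proof. by move=> h; rewrite (kseq_cons _ _ _ (ltnW h)) (kseq_cons _ _ _ h). Qed.

Lemma cf_last k s : cf (kseq k s s) = (k s)%:~R.
Proof. by rewrite kseq_cons // kseq_nil. Qed.

Lemma invf_lt1' (x : rat) : 1 < x -> 0 < x^-1 < 1.
Proof. move=> h; have x0 : 0 < x by lra. by rewrite invr_gt0 x0 invf_lt1. Qed.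

Lemma Pdown k s (hk : forall j, (2 <= j <= s)%N -> 2 <= k j) : forall d j, (j + d = s)%N -> (2 <= j)%N ->
  [/\ 1 < cf (kseq k j s), denq (cf (kseq k j s)) = nn k j.+1 s &
      nn k j s = k j * nn k j.+1 s - nn k j.+2 s].
Proof.
elim=> [|d IH] j hj j2.
- rewrite addn0 in hj; subst j.
  have ks : 2 <= k s by apply: hk; rewrite j2 leqnn.
  rewrite cf_last nn_s1 nn_s2 nn_le // cf_last numq_int denq_int.
  split => //; [ by rewrite ltr1z; lia | lia].
- have hj' : (j.+1 + d = s)%N by lia.
  have j2' : (2 <= j.+1)%N by lia.
  have [h1 h2 h3] := IH j.+1 hj' j2'.
  have js : (j < s)%N by lia.
  have kj : 2 <= k j by apply: hk; rewrite j2 /=; lia.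
  have x0 : 0 < cf (kseq k j.+1 s) by lra.
  have [hn hd] := cf_step _ (k j) x0.
  rewrite (nn_le _ _ _ (ltnW js)) (cf_cons _ _ _ js) hn hd -(nn_le _ _ _ js) h2.
  split => //.
  have := invf_lt1' _ h1; move=> /andP[a1 a2].
  have : (2:rat) <= (k j)%:~R by rewrite (ler_int rat 2).
  lra.
Qed.

Lemma NNfacts (s p q : nat) (k : nat -> int) :
 (0 < s)%N -> (0<p)%N -> (0<q)%N -> coprime p q ->
 (forall j, (2 <= j <= s)%N -> 2 <= k j) -> cf (kseq k 1 s) = p%:R / q%:R ->
 [/\ nn k 1 s = p%:Z, nn k 2 s = q%:Z,
     (forall t, (1 <= t <= s.+1)%N -> 0 < nn k t s) &
     (forall t, (1 <= t <= s)%N -> nn k t s = k t * nn k t.+1 s - nn k t.+2 s)].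
Proof.
move=> s0 p0 q0 co hk hcf.
have hpq : (p%:R / q%:R : rat) = (p%:Z)%:~R / (q%:Z)%:~R by rewrite !pmulrn.
have [np dq] : numq (cf (kseq k 1 s)) = p%:Z /\ denq (cf (kseq k 1 s)) = q%:Z.
  by rewrite hcf hpq; apply: numden_eq => //; rewrite ltz_nat.
have P := @Pdown k s hk.
have Pj : forall j, (2 <= j <= s)%N -> [/\ 1 < cf (kseq k j s), denq (cf (kseq k j s)) = nn k j.+1 s &
      nn k j s = k j * nn k j.+1 s - nn k j.+2 s].
  move=> j /andP[j2 js]; apply: (P (s - j)%N) => //; lia.
have N1 : nn k 1 s = p%:Z by rewrite nn_le.
have [N2 rec1] : nn k 2 s = q%:Z /\ nn k 1 s = k 1%N * nn k 2 s - nn k 3 s.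
  case: (ltnP 1 s) => hs.
  - have hh : (2 <= 2 <= s)%N by rewrite leqnn hs.
    have [h1 h2 h3] := Pj 2%N hh.
    have x0 : 0 < cf (kseq k 2 s) by lra.
    have [hn hd] := cf_step _ (k 1%N) x0.
    have e2 : nn k 2 s = q.
      by rewrite -dq (cf_cons _ _ _ hs) hd (nn_le _ _ _ hs).
    split => //.
    by rewrite (nn_le _ 1 s (ltnW hs)) (cf_cons _ _ _ hs) hn h2 -(nn_le _ 2 s hs).
  - have s1 : s = 1%N by lia.
    subst s; rewrite nn_s1 nn_s2 nn_le // cf_last numq_int.
    move: dq; rewrite cf_last denq_int => <-; split => //; lia.
split => //.
- move=> t /andP[t1 ts].
  case: (ltnP s t) => hst.
  + have -> : t = s.+1 by lia. by rewrite nn_s1.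
  case: (ltnP 1 t) => ht.
  + have hh : (2 <= t <= s)%N by rewrite ht hst.
    have [h1 h2 h3] := Pj t hh.
    by rewrite nn_le // numq_gt0; lra.
  + have -> : t = 1%N by lia. by rewrite N1 ltz_nat.
- move=> t /andP[t1 ts].
  case: (ltnP 1 t) => ht.
  + have hh : (2 <= t <= s)%N by rewrite ht ts.
    by have [] := Pj t hh.
  + by have -> : t = 1%N by lia.
Qed.

Lemma size_alist k s a i : size (alist k s a i) = i.
Proof. by elim: i => //= i IH; rewrite size_rcons IH. Qed.

Lemma nth_alist k s a i t : (t < i)%N -> nth 0 (alist k s a i) t = aa k s a t.+1.
Proof.
rewrite /aa /=; elim: i => // i IH ti.
rewrite [alist _ _ _ i.+1]/= nth_rcons size_alist.
case: (ltnP t i) => h; first by rewrite IH.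
have -> : t = i by lia.
by rewrite eqxx nth_rcons size_alist ltnn eqxx.
Qed.

Definition rr k s a i := a - \sum_(t < i) nn k t.+2 s * aa k s a t.+1.

Lemma aa_succ k s a i :
  aa k s a i.+1 = Num.floor (((rr k s a i)%:~R / (nn k i.+2 s)%:~R) : rat).
Proof.
rewrite /aa /= nth_rcons size_alist ltnn eqxx /rr.
congr (Num.floor ((_ - _)%:~R / _)).
by apply: eq_bigr => t _; rewrite nth_alist.
Qed.

Lemma Afacts s p k a :
  (forall t, (1 <= t <= s.+1)%N -> 0 < nn k t s) -> nn k 1 s = p%:Z ->
  0 <= a -> a < p%:Z ->
  [/\ aprime k s a 1 = a,
      (forall j, (1 <= j <= s.+1)%N -> 0 <= aprime k s a j < nn k j s),
      (forall j, (1 <= j <= s)%N -> aprime k s a j = nn k j.+1 s * aa k s a j + aprime k s a j.+1),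
      aprime k s a s.+1 = 0 &
      (forall j, (1 <= j <= s)%N -> 0 <= aa k s a j)].
Proof.
move=> Np N1 a0 ap.
have rrS : forall i, rr k s a i.+1 = rr k s a i - nn k i.+2 s * aa k s a i.+1.
  by move=> i; rewrite /rr big_ord_recr /=; ring.
have rb : forall i, (i <= s)%N -> 0 <= rr k s a i < nn k i.+1 s.
  elim=> [|i IH] his; first by rewrite /rr big_ord0 subr0 N1 a0 ap.
  have /andP[h1 h2] := IH (ltnW his).
  have B0 : 0 < nn k i.+2 s by apply: Np; lia.
  have [f1 f2] := floor_div (rr k s a i) _ B0.
  rewrite rrS aa_succ.
  move: f1 f2; set F := Num.floor _ => f1 f2.
  apply/andP; split; lia.
have aa0 : forall j, (1 <= j <= s)%N -> 0 <= aa k s a j.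
  move=> [|j] // /andP[_ js]; rewrite aa_succ floor_ge0.
  have /andP[h1 _] := rb j (ltnW js).
  have B0 : 0 < nn k j.+2 s by apply: Np; lia.
  by rewrite divr_ge0 // ler0z // ltW.
have rs : rr k s a s = 0.
  have := rb s (leqnn s); rewrite nn_s1 => /andP[h1 h2]; lia.
have apS : forall j, (1 <= j <= s)%N -> aprime k s a j = nn k j.+1 s * aa k s a j + aprime k s a j.+1.
  move=> j /andP[j1 js]; rewrite /aprime big_ltn //.
have aps1 : aprime k s a s.+1 = 0 by rewrite /aprime big_geq.
have apr : forall d j, (j + d = s)%N -> aprime k s a j.+1 = rr k s a j.
  elim=> [|d IH] j hj; first by rewrite addn0 in hj; subst j; rewrite aps1 rs.
  rewrite apS; last by lia.
  rewrite IH; last by lia.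
  rewrite rrS; ring.
have apr' : forall j, (j <= s)%N -> aprime k s a j.+1 = rr k s a j.
  by move=> j js; apply: (apr (s - j)%N); lia.
split => //.
- by rewrite apr' // /rr big_ord0 subr0.
- move=> [|j] // /andP[_ js]; rewrite apr' //; exact: rb.
Qed.

Lemma last_lt_build sts : (rg_last (build sts) < rg_n (build sts))%N.
Proof.
rewrite /build.
have : (rg_last rg_init < rg_n rg_init)%N by [].
elim: sts rg_init => //= st t IH G hG; apply: IH.
by case: st.
Qed.

Definition colF G s k mf (x : Vtx G s -> rat) (v : Vtx G s) : rat :=
  \sum_u x u * (GMform G s k mf u v)%:~R.

Lemma bform_col G s k mf x y :
  bform G s k mf x y = \sum_w y w * colF G s k mf x w.
Proof.
rewrite /bform /colF exchange_big /=; apply: eq_bigr => w _.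
rewrite mulr_sumr; apply: eq_bigr => u _; ring.
Qed.

Lemma bform_bvec G s k mf x v : bform G s k mf x (bvec G s v) = colF G s k mf x v.
Proof.
rewrite bform_col (bigD1 v) //= /bvec eqxx mul1r big1 ?addr0 // => w /negbTE ->.
by rewrite mul0r.
Qed.

Lemma bform_bchain G s k mf x (j : 'I_s) :
  bform G s k mf x (bchain G s (val j).+1) = colF G s k mf x (inr j).
Proof.
rewrite -bform_bvec !bform_col; apply: eq_bigr => [[w|w]] _ //=.
Qed.

Lemma colF_lin G s k mf (x y z : Vtx G s -> rat) (al be : rat) w :
  (forall u, x u = al * y u + be * z u) ->
  colF G s k mf x w = al * colF G s k mf y w + be * colF G s k mf z w.
Proof.
move=> h; rewrite /colF !mulr_sumr -big_split /=; apply: eq_bigr => u _.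
rewrite h; ring.
Qed.

Definition ych G s (x : Vtx G s -> rat) (t : nat) : rat :=
  if t is t'.+1 then (if (insub t' : option 'I_s) is Some j then x (inr j) else 0) else 0.

Arguments ych : simpl never.

Lemma ych_ord G s x (j : 'I_s) : ych G s x (val j).+1 = x (inr j).
Proof. by rewrite /ych valK. Qed.

Lemma ych_out G s x t : (s <= t)%N -> ych G s x t.+1 = 0.
Proof. by move=> h; rewrite /ych insubF //; apply/negbTE; rewrite -leqNgt. Qed.

Lemma sum_delta (n c : nat) (f : nat -> rat) :
  \sum_(j < n) f j * (val j == c)%:R = if (c < n)%N then f c else 0.
Proof.
elim: n => [|n IH]; first by rewrite big_ord0.
rewrite big_ord_recr /= IH.
case: eqP => e.
- subst c; rewrite ltnn ltnSn /=; ring.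
- rewrite /= mulr0 addr0.
  by have -> : (c < n.+1)%N = (c < n)%N by lia.
Qed.

Lemma sum_deltaS (n c : nat) (f : nat -> rat) :
  \sum_(j < n) f j * (j.+1 == c)%:R = if c is c'.+1 then (if (c' < n)%N then f c' else 0) else 0.
Proof.
case: c => [|c].
- by rewrite big1 // => j _; rewrite /= mulr0.
- under eq_bigr do rewrite eqSS.
  by rewrite sum_delta.
Qed.

Definition kk (k : nat -> int) (mf : int) (t : nat) : rat :=
  if t == 1%N then (k 1%N + mf)%:~R else (k t)%:~R.

Lemma GM_inr G s k mf (j' j : 'I_s) :
  (GMform G s k mf (inr j') (inr j))%:~R =
  (val j' == val j)%:R * - kk k mf (val j).+1 + (val j' == (val j).+1)%:R + ((val j').+1 == val j)%:R :> rat.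
Proof.
rewrite /GMform /kk -val_eqE.
move: (val j') (val j) => a b.
case: (ltngtP a b) => h.
- have -> : (a == b.+1) = false by apply/negbTE/eqP; lia.
  rewrite [b == a.+1]eq_sym.
  by case: (a.+1 == b) => /=; rewrite mul0r ?add0r ?addr0.
- have -> : (a.+1 == b) = false by apply/negbTE/eqP; lia.
  have -> : (b == a.+1) = false by apply/negbTE/eqP; lia.
  by case: (a == b.+1) => /=; rewrite mul0r ?add0r ?addr0.
- rewrite -h.
  have -> : (a == a.+1) = false by apply/negbTE/eqP; lia.
  have -> : (a.+1 == a) = false by apply/negbTE/eqP; lia.
  rewrite eqSS.
  case: (a == 0)%N => /=; rewrite ?intrN ?intrD ?intrB; ring.
Qed.

Arguments GMform : simpl never.

Definition wv G s (x : Vtx G s -> rat) (v0 : 'I_(rg_n G)) (t : nat) : rat :=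
  if t is 0 then x (inl v0) else ych G s x t.

Lemma ych_ord' G s x (j : 'I_s) : ych G s x (nat_of_ord j).+1 = x (inr j).
Proof. by rewrite /ych valK. Qed.

Lemma colF_inr G s k mf (v0 : 'I_(rg_n G)) (hv0 : val v0 = rg_last G) x (j : 'I_s) :
  colF G s k mf x (inr j) = wv G s x v0 (val j) - kk k mf (val j).+1 * wv G s x v0 (val j).+1
     + wv G s x v0 (val j).+2.
Proof.
rewrite /colF big_sumType /=.
case: j => b hb /=.
have -> : \sum_(y < rg_n G) x (inl y) * (GMform G s k mf (inl y) (inr (Ordinal hb)))%:~R
    = (b == 0)%:R * x (inl v0).
  rewrite (bigD1 v0) //= big1 ?addr0.
    rewrite /GMform /=.
    have -> : (nat_of_ord v0 == rg_last G) = true by apply/eqP.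
    by case: (b == 0)%N => /=; ring.
  move=> y ne; rewrite /GMform /=.
  have -> : (nat_of_ord y == rg_last G) = false.
    by apply/negbTE; apply: contra ne => /eqP e; apply/eqP/val_inj; rewrite /= e hv0.
  by rewrite /= mulr0.
pose f t := ych G s x t.+1.
have -> : \sum_(j' < s) x (inr j') * (GMform G s k mf (inr j') (inr (Ordinal hb)))%:~R =
  (\sum_(j' < s) f j' * (nat_of_ord j' == b)%:R) * - kk k mf b.+1
  + \sum_(j' < s) f j' * (nat_of_ord j' == b.+1)%:R
  + \sum_(j' < s) f j' * ((nat_of_ord j').+1 == b)%:R.
  rewrite mulr_suml -!big_split /=; apply: eq_bigr => -[a ha] _.
  rewrite GM_inr /f (ych_ord' G s x (Ordinal ha)) /=; ring.
rewrite sum_delta sum_delta sum_deltaS hb.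
have -> : (if (b.+1 < s)%N then f b.+1 else 0) = ych G s x b.+2.
  case: ltnP => h //; by rewrite ych_out.
case: b hb => [|b] hb /=; rewrite /f.
- ring.
- rewrite ltnW //; ring.
Qed.

Lemma colF_inl G s k mf x (v : 'I_(rg_n G)) :
  colF G s k mf x (inl v) = \sum_(y < rg_n G) x (inl y) * (gbar_form G y v)%:~R
     + (nat_of_ord v == rg_last G)%:R * ych G s x 1.
Proof.
rewrite /colF big_sumType /=; congr (_ + _).
case: (posnP s) => hs.
- rewrite big1; last by move=> [j hj]; exfalso; lia.
  by rewrite ych_out ?hs // mulr0.
pose o : 'I_s := Ordinal hs.
rewrite (bigD1 o) //= big1 ?addr0.
  have -> : ych G s x 1 = x (inr o) by rewrite -(ych_ord' G s x o).
  rewrite /GMform /=.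
  by case: (nat_of_ord v == rg_last G) => /=; ring.
move=> j ne; rewrite /GMform /=.
have -> : (nat_of_ord j == 0)%N = false.
  by apply/negbTE; apply: contra ne => /eqP e; apply/eqP/val_inj; rewrite /= e.
by rewrite andbF /= mulr0.
Qed.

Definition Ei (kint : nat -> int) (w : nat -> int) (t : nat) : int :=
  w t.-1 - kint t * w t + w t.+1.

Set Implicit Arguments.

Record chainH (s p q : nat) (mf a : int) (N kint ap A : nat -> int) : Prop := ChainH {
 cs : (0 < s)%N; cN1 : N s.+1 = 1; cN2 : N s.+2 = 0; cNp : N 1%N = p%:Z; cNq : N 2 = q%:Z;
 cpos : forall t, (1 <= t <= s.+1)%N -> 0 < N t;
 crec : forall t, (2 <= t <= s)%N -> N t = kint t * N t.+1 - N t.+2;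
 crec1 : kint 1%N * N 2 - N 3 = p%:Z + q%:Z * mf;
 cap : forall j, (1 <= j <= s)%N -> ap j = \sum_(j <= t < s.+1) N t.+1 * A t;
 capb : forall j, (1 <= j <= s.+1)%N -> 0 <= ap j < N j;
 cap1 : ap 1%N = a;
 cA : forall t, (1 <= t <= s)%N -> 0 <= A t;
 cmf : 0 <= mf }.


Lemma teleI s p q mf a N kint ap A (H : chainH s p q mf a N kint ap A) (w : nat -> int) :
  w s.+1 = 0 -> forall j, (1 <= j <= s)%N ->
  \sum_(j <= t < s.+1) N t.+1 * Ei kint w t
   = N j.+1 * w j.-1 - (kint j * N j.+1 - N j.+2) * w j.
Proof.
move=> ws.
have main : forall d j, (j + d = s)%N -> (1 <= j)%N ->
  \sum_(j <= t < s.+1) N t.+1 * Ei kint w t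
   = N j.+1 * w j.-1 - (kint j * N j.+1 - N j.+2) * w j.
  elim=> [|d IH] j hj j1.
  - rewrite addn0 in hj; subst j.
    rewrite big_ltn // big_geq // (cN1 H) (cN2 H) /Ei ws; ring.
  - rewrite big_ltn; last by lia.
    rewrite IH; [|lia|lia].
    have r : N j.+1 = kint j.+1 * N j.+2 - N j.+3 by apply: (crec H); lia.
    rewrite /Ei /= -r; ring.
move=> j /andP[j1 js]; apply: (main (s - j)%N); lia.
Qed.

Lemma apS s p q mf a N kint ap A (H : chainH s p q mf a N kint ap A) j :
  (1 <= j < s)%N -> ap j = N j.+1 * A j + ap j.+1.
Proof.
move=> /andP[j1 js].
have h1 : (1 <= j <= s)%N by lia.
have h2 : (1 <= j.+1 <= s)%N by lia.
have h3 : (j < s.+1)%N by lia.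
by rewrite (cap H j h1) (cap H j.+1 h2) big_ltn.
Qed.

Lemma apsS s p q mf a N kint ap A (H : chainH s p q mf a N kint ap A) :
  ap s = A s.
Proof.
have s0 := cs H.
have h1 : (1 <= s <= s)%N by lia.
rewrite (cap H s h1) big_ltn // big_geq // (cN1 H); ring.
Qed.

Lemma sum_le s p q mf a N kint ap A (H : chainH s p q mf a N kint ap A) (w : nat -> int) j :
  (1 <= j <= s)%N -> (forall t, (1 <= t <= s)%N -> Ei kint w t <= A t) ->
  \sum_(j <= t < s.+1) N t.+1 * Ei kint w t <= ap j.
Proof.
move=> hj h; rewrite (cap H) //; apply: ler_sum_nat => t ht.
have Np : 0 < N t.+1 by apply: (cpos H); lia.
apply: ler_wpM2l; first exact: ltW.
apply: h; lia.
Qed.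

Lemma chainY s p q mf a N kint ap A (H : chainH s p q mf a N kint ap A) (w : nat -> int) :
  w s.+1 = 0 -> (forall t, (t <= s)%N -> w t <= 0) -> mf * w 1%N <= w 0%N ->
  (forall t, (1 <= t <= s)%N -> Ei kint w t <= A t) ->
  forall t, (t <= s)%N -> w t = 0.
Proof.
move=> ws wle w0 hE.
have s0 := cs H.
have w1 : w 1%N = 0.
  have h1 : (1 <= 1 <= s)%N by lia.
  have := sum_le H w 1 h1 hE.
  rewrite (teleI H w ws 1 h1) /= (crec1 H) (cNq H).
  have h2 : (1 <= 1 <= s.+1)%N by lia.
  have := capb H 1 h2; rewrite (cap1 H) (cNp H) => /andP[_ apb].
  have := wle 1%N s0; have q0 : 0 <= q%:Z by [].
  move=> hh1 hh2; nia.
have wj : forall j, (1 <= j <= s)%N -> w j = 0.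
  elim=> [|j IH] // /andP[_ js].
  case: (posnP j) => j0; first by subst j.
  have IHj : w j = 0 by apply: IH; lia.
  have h1 : (1 <= j.+1 <= s)%N by lia.
  have := sum_le H w j.+1 h1 hE.
  rewrite (teleI H w ws j.+1 h1) /= IHj.
  have r : kint j.+1 * N j.+2 - N j.+3 = N j.+1 by rewrite -(crec H); lia.
  rewrite r.
  have h2 : (1 <= j.+1 <= s.+1)%N by lia.
  have := capb H j.+1 h2; move=> /andP[_ apb].
  have := wle j.+1 js; move=> hh1 hh2.
  have Np : 0 < N j.+1 by apply: (cpos H); lia.
  nia.
move=> [|t] ht; last by apply: wj; lia.
have := wle 0%N (leq0n _); move: w0; rewrite w1 mulr0; lia.
Qed.

Lemma chainB s p q mf a N kint ap A (H : chainH s p q mf a N kint ap A) (w : nat -> int) :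
  w s.+1 = 0 -> (forall t, (1 <= t <= s)%N -> Ei kint w t <= A t) ->
  q%:Z * w 0%N - a <= (p%:Z + q%:Z * mf) * w 1%N /\
  (forall j, (2 <= j <= s)%N -> N j.+1 * w j.-1 - ap j <= N j * w j).
Proof.
move=> ws hE; have s0 := cs H; split.
- have h1 : (1 <= 1 <= s)%N by lia.
  have := sum_le H w 1 h1 hE.
  rewrite (teleI H w ws 1 h1) /= (crec1 H) (cNq H) (cap1 H); lia.
- move=> j hj; have h1 : (1 <= j <= s)%N by lia.
  have := sum_le H w j h1 hE.
  rewrite (teleI H w ws j h1).
  rewrite -(crec H) //; lia.
Qed.

Lemma chainA s p q mf a N kint ap A (H : chainH s p q mf a N kint ap A) (w : nat -> int) :
  w s.+1 = 0 ->
  q%:Z * w 0%N - a <= (p%:Z + q%:Z * mf) * w 1%N < q%:Z * w 0%N - a + (p%:Z + q%:Z * mf) ->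
  (forall j, (2 <= j <= s)%N ->
     N j.+1 * w j.-1 - ap j <= N j * w j < N j.+1 * w j.-1 - ap j + N j) ->
  forall t, (1 <= t <= s)%N -> Ei kint w t <= A t.
Proof.
move=> ws h1 hj.
have s0 := cs H.
pose S j := \sum_(j <= t < s.+1) N t.+1 * Ei kint w t - ap j.
have Sb : forall j, (1 <= j <= s)%N -> - (kint j * N j.+1 - N j.+2) < S j <= 0.
  move=> j hj1; have /andP[j1 js] := hj1; rewrite /S (teleI H w ws j hj1).
  case: (posnP j.-1) => jj.
  - have -> : j = 1%N by lia.
    rewrite /= (crec1 H) (cNq H) (cap1 H); move: h1 => /andP[]; lia.
  - have hj2 : (2 <= j <= s)%N by lia.
    have := hj j hj2; rewrite -(crec H j hj2).
    move=> /andP[]; lia.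
move=> t /andP[t1 ts].
have Np : 0 < N t.+1 by apply: (cpos H); lia.
case: (ltnP t s) => hts.
- have ht1 : (1 <= t < s)%N by lia.
  have ht2 : (t < s.+1)%N by lia.
  have e : S t = N t.+1 * (Ei kint w t - A t) + S t.+1.
    rewrite /S (big_ltn ht2) (apS H t ht1); ring.
  have hA : (1 <= t <= s)%N by lia.
  have hB : (1 <= t.+1 <= s)%N by lia.
  have hC : (2 <= t.+1 <= s)%N by lia.
  have := Sb t hA; have := Sb t.+1 hB.
  rewrite -(crec H t.+1 hC).
  rewrite e => /andP[a1 _] /andP[_ a2].
  nia.
- have ets : t = s by lia.
  subst t.
  have hA : (1 <= s <= s)%N by lia.
  have := Sb s hA; move=> /andP[_].
  rewrite /S big_ltn // big_geq // (apsS H) (cN1 H); lia.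
Qed.

Unset Implicit Arguments.

Definition ychI G s (x : Vtx G s -> int) (t : nat) : int :=
  if t is t'.+1 then (if (insub t' : option 'I_s) is Some j then x (inr j) else 0) else 0.
Definition wvI G s (x : Vtx G s -> int) (v0 : 'I_(rg_n G)) (t : nat) : int :=
  if t is 0 then x (inl v0) else ychI G s x t.

Arguments ychI : simpl never.
Arguments wvI : simpl never.

Definition kint (k : nat -> int) (mf : int) (t : nat) : int :=
  if t == 1%N then k 1%N + mf else k t.

Lemma ych_cast G s (x : Vtx G s -> int) t :
  ych G s (fun u => (x u)%:~R) t = (ychI G s x t)%:~R.
Proof. by case: t => [|t] //; rewrite /ych /ychI; case: insub. Qed.

Lemma wv_cast G s (x : Vtx G s -> int) v0 t :
  wv G s (fun u => (x u)%:~R) v0 t = (wvI G s x v0 t)%:~R.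
Proof. by case: t => [|t] //; rewrite /wv /wvI ych_cast. Qed.

Lemma colF_inr_int G s k mf (v0 : 'I_(rg_n G)) (hv0 : nat_of_ord v0 = rg_last G)
  (x : Vtx G s -> int) (j : 'I_s) :
  colF G s k mf (fun u => (x u)%:~R) (inr j) = (Ei (kint k mf) (wvI G s x v0) (nat_of_ord j).+1)%:~R.
Proof.
rewrite (colF_inr G s k mf v0 hv0) !wv_cast /Ei /kk /kint /=.
case: (_ == _); rewrite ?(intrD, intrB, intrM, intrN); ring.
Qed.

Lemma ychI_out G s (x : Vtx G s -> int) t : (s <= t)%N -> ychI G s x t.+1 = 0.
Proof. by move=> h; rewrite /ychI insubF //; apply/negbTE; rewrite -leqNgt. Qed.

Lemma ychI_in G s (x : Vtx G s -> int) t (h : (t < s)%N) : ychI G s x t.+1 = x (inr (Ordinal h)).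
Proof. by rewrite /ychI insubT. Qed.

Lemma ychI_zero G s (x : Vtx G s -> int) t : (forall j, x (inr j) = 0) -> ychI G s x t = 0.
Proof. by move=> h; case: t => [|t] //; rewrite /ychI; case: insub. Qed.

Lemma ych_zero G s (x : Vtx G s -> rat) t : (forall j, x (inr j) = 0) -> ych G s x t = 0.
Proof. by move=> h; case: t => [|t] //; rewrite /ych; case: insub. Qed.

Fixpoint Wn (k : nat -> int) (s : nat) (a : int) (t : nat) : int :=
  match t with
  | 0 => 0
  | t1.+1 => match t1 with 0 => 0 | t2.+1 => k t1 * Wn k s a t1 - Wn k s a t2 - aa k s a t1 end
  end.

Theorem proposition7p4
  (sts : seq step) (s p q : nat) (k : nat -> int) (mf : int)
  (gs l : Vtx (build sts) s -> rat) (i : nat) (a : int) :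
  min_res_steps sts ->
  is_mf (build sts) mf ->
  (0 < s)%N -> (0 < p)%N -> (0 < q)%N -> coprime p q ->
  1 <= k 1%N -> (forall j, (2 <= j <= s)%N -> 2 <= k j) ->
  cf (kseq k 1 s) = p%:R / q%:R ->
  is_gs (build sts) s k mf gs ->
  is_lprime (build sts) s k mf a gs l ->
  0 <= a -> a < p%:Z ->
  (* (a) *)
  ((forall v, 0 <= zcyc (build sts) s i (useq k s p q mf a i) v) /\
   (forall j, (1 <= j <= s)%N ->
      bform (build sts) s k mf (fun v => zcyc (build sts) s i (useq k s p q mf a i) v + l v) (bchain (build sts) s j) <= 0)) /\
  (* (b) *)
  (forall ub : nat -> int,
     (forall v, 0 <= zcyc (build sts) s i ub v) ->
     (forall j, (1 <= j <= s)%N -> bform (build sts) s k mf (fun v => zcyc (build sts) s i ub v + l v) (bchain (build sts) s j) <= 0) ->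
     u1bound p q mf a i <= ub 1%N /\
     (forall j, (1 < j <= s)%N -> ubound k s a j (ub j.-1) <= ub j)).
Proof.
move=> _ hmf s0 p0 q0 cop _ hk hcf hgs hl a0 ap.
have hlt := last_lt_build sts.
move: hmf hgs hl hlt; set G := build sts => hmf hgs hl hlt.
pose v0 : 'I_(rg_n G) := Ordinal hlt.
have hv0 : nat_of_ord v0 = rg_last G by [].
have [N1 N2 Npos Nrec] := NNfacts s p q k s0 p0 q0 cop hk hcf.
have [ap1 apb aprec aps1 aa0] := Afacts s p k a Npos N1 a0 ap.
have SQ : forall y, in_SQ G s k mf y <-> forall v, colF G s k mf y v <= 0.
  by move=> y; split => h v; [rewrite -bform_bvec | rewrite bform_bvec]; apply: h.
case: hl => [[zl hzl] hSQl hminl].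
have lSQ := (SQ l).1 hSQl.
have gsl : forall x : 'I_(rg_n G), colF G s k mf gs (inl x) = 0.
  by move=> x; rewrite -bform_bvec hgs.
have gsr : forall j : 'I_s, colF G s k mf gs (inr j) = ((nat_of_ord j).+1 == s)%:R.
  by move=> j; rewrite -bform_bvec hgs.
case: hmf => mv [hmv0 hmv].
have hmvr : forall v : 'I_(rg_n G), \sum_(y < rg_n G) (mv y)%:~R * (gbar_form G y v)%:~R
     = - ((nat_of_ord v == rg_last G)%:R : rat).
  move=> v; have := hmv v (ltn_ord v).
  move/(congr1 (fun z : int => (z%:~R : rat))).
  rewrite intrD rmorph_sum /=.
  under eq_bigr do rewrite intrM.
  case: (_ == _) => /= h; lra.
pose Dint (u : Vtx G s) : int := match u with inl x => mv x | inr _ => 0 end.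
have Dl : forall v : 'I_(rg_n G), colF G s k mf (fun u => (Dint u)%:~R) (inl v)
    = - ((nat_of_ord v == rg_last G)%:R : rat).
  move=> v; rewrite colF_inl ych_zero // mulr0 addr0 /=; exact: hmvr.
have Dr : forall j : 'I_s, colF G s k mf (fun u => (Dint u)%:~R) (inr j)
    = if nat_of_ord j == 0%N then mf%:~R else 0.
  have wz : forall t, (0 < t)%N -> wvI G s Dint v0 t = 0.
    by case=> // t _; rewrite /wvI; exact: ychI_zero.
  move=> j; rewrite (colF_inr_int G s k mf v0 hv0) /Ei.
  case: j => [[|j] hj] /=.
  - by rewrite (wz 1%N) // (wz 2%N) // mulr0 subr0 addr0 /wvI; congr (_%:~R); exact: hmv0.
  - by rewrite (wz j.+1) // (wz j.+2) // (wz j.+3) // mulr0 subr0 addr0.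
have mf0 : 0 <= mf.
  case: (lerP 0 mf) => // hneg; exfalso.
  have hy := hminl (fun u => l u + (Dint u)%:~R) _ _ (inl v0).
  have : l (inl v0) <= l (inl v0) + (Dint (inl v0))%:~R.
    apply: hy.
    - by exists (fun u => zl u + Dint u) => u; rewrite hzl intrD; ring.
    - apply/SQ => v.
      rewrite (colF_lin G s k mf _ l (fun u => (Dint u)%:~R) 1 1 v); last by move=> u; rewrite !mul1r.
      rewrite !mul1r; case: v => [x|j].
      + rewrite Dl; have := lSQ (inl x); case: (_ == _) => /=; lra.
      + rewrite Dr; have := lSQ (inr j); case: (_ == _) => /= h.
        * have : (mf%:~R : rat) < 0 by rewrite ltrz0. lra.
        * lra.
  have e : Dint (inl v0) = mf by exact: hmv0.
  rewrite e -subr_ge0 addrC addKr ler0z => h; lia.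
have H : chainH s p q mf a (fun t => nn k t s) (kint k mf) (aprime k s a) (aa k s a).
  constructor => //.
  - exact: nn_s1.
  - exact: nn_s2.
  - move=> t ht; rewrite /kint.
    have -> : (t == 1%N) = false by apply/negbTE/eqP; lia.
    apply: Nrec; lia.
  - rewrite /kint /=.
    have h1 : (1 <= 1 <= s)%N by lia.
    have := Nrec 1%N h1; rewrite N1 N2 => e; rewrite e; ring.
pose Wint (u : Vtx G s) : int := match u with inl _ => 0 | inr j => Wn k s a (nat_of_ord j).+1 end.
have wW : forall t, wvI G s Wint v0 t = if (t <= s)%N then Wn k s a t else 0.
  case=> [|t]; first by rewrite /wvI.
  rewrite /wvI; case: (ltnP t s) => h.
  - by rewrite (ychI_in _ _ _ _ h).
  - by rewrite ychI_out // ltnNge h.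
have EW : forall t, (1 <= t < s)%N -> Ei (kint k mf) (wvI G s Wint v0) t = - aa k s a t.
  move=> [|t] // /andP[_ ts]; rewrite /Ei !wW /=.
  have -> : (t <= s)%N by lia.
  have -> : (t < s)%N by lia.
  have -> : (t.+1 < s)%N by lia.
  case: t ts => [|t] ts /=; rewrite /kint /=; first ring.
  ring.
have ws1 : wvI G s Wint v0 s.+1 = 0 by rewrite wW ltnn.
have EWs : Ei (kint k mf) (wvI G s Wint v0) s = a - aa k s a s.
  have h1 : (1 <= 1 <= s)%N by lia.
  have T := teleI H (wvI G s Wint v0) ws1 1%N h1.
  rewrite (wW 0%N) (wW 1%N) /= s0 /= in T.
  rewrite big_nat_recr /= in T; last by lia.
  have e1 : \sum_(1 <= t < s) nn k t.+1 s * Ei (kint k mf) (wvI G s Wint v0) t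
          = - \sum_(1 <= t < s) nn k t.+1 s * aa k s a t.
    rewrite -sumrN; apply: eq_big_nat => t ht; rewrite EW //; ring.
  have e2 := ap1; rewrite /aprime big_nat_recr /= in e2; last by lia.
  rewrite nn_s1 in T e2; rewrite e1 in T.
  rewrite !mul1r !mulr0 subr0 in T e2.
  move: T e2; set S := \sum_(1 <= t < s) _; move=> T e2.
  lia.
pose c (u : Vtx G s) : rat := - (a%:~R) * gs u + (Wint u)%:~R.
have cr : forall j : 'I_s, colF G s k mf c (inr j) = - (aa k s a (nat_of_ord j).+1)%:~R.
  move=> j.
  rewrite (colF_lin G s k mf c gs (fun u => (Wint u)%:~R) (- (a%:~R)) 1 (inr j)); last by move=> u; rewrite mul1r.
  rewrite gsr mul1r (colF_inr_int G s k mf v0 hv0).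
  case: (ltnP (nat_of_ord j).+1 s) => h.
  - have -> : ((nat_of_ord j).+1 == s) = false by apply/negbTE/eqP; lia.
    rewrite EW ?intrN /=; [ring | lia].
  - have e : (nat_of_ord j).+1 = s by have := ltn_ord j; lia.
    rewrite e eqxx EWs intrB /=; ring.
have cl : forall x, colF G s k mf c (inl x) = 0.
  move=> x.
  rewrite (colF_lin G s k mf c gs (fun u => (Wint u)%:~R) (- (a%:~R)) 1 (inl x)); last by move=> u; rewrite mul1r.
  rewrite gsl mulr0 add0r mul1r colF_inl big1; last by move=> y _; rewrite /= mul0r.
  have -> : ych G s (fun u => (Wint u)%:~R) 1 = 0.
    have e : ychI G s Wint 1 = 0 by have := wW 1%N; rewrite /wvI => ->; case: ifP.
    by rewrite ych_cast e.
  by rewrite mulr0 addr0.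
have ccos : in_coset G s a gs c by exists Wint.
have cSQ : in_SQ G s k mf c.
  apply/SQ => -[x|j]; first by rewrite cl.
  rewrite cr oppr_le0 ler0z; apply: aa0; have := ltn_ord j; lia.
have lc : forall u, l u <= c u := hminl c ccos cSQ.
have [Yi hY] : exists Yi : Vtx G s -> int, forall u, l u - c u = (Yi u)%:~R.
  by exists (fun u => zl u - Wint u) => u; rewrite hzl /c intrB; ring.
have Yle : forall u, Yi u <= 0.
  by move=> u; have := lc u; rewrite -subr_le0 hY lerz0.
have colY : forall v, colF G s k mf (fun u => (Yi u)%:~R) v = colF G s k mf l v - colF G s k mf c v.
  move=> v; rewrite (colF_lin G s k mf _ l c 1 (-1) v); first ring.
  by move=> u; rewrite -hY; ring.
have EY : forall t, (1 <= t <= s)%N -> Ei (kint k mf) (wvI G s Yi v0) t <= aa k s a t.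
  move=> [|t] // /andP[_ ts].
  have := colF_inr_int G s k mf v0 hv0 Yi (Ordinal ts).
  rewrite colY cr /= => e.
  rewrite -(ler_int rat) -e; have := lSQ (inr (Ordinal ts)); lra.
have wY0 : forall t, (t <= s)%N -> wvI G s Yi v0 t <= 0.
  case=> [|t] ht; rewrite /wvI; first exact: Yle.
  rewrite (ychI_in _ _ _ _ ht); exact: Yle.
have wYs : wvI G s Yi v0 s.+1 = 0 by rewrite /wvI ychI_out.
pose Y1 := wvI G s Yi v0 1.
pose Y'i (u : Vtx G s) : int := match u with inl x => Yi (inl x) - Y1 * mv x | inr _ => 0 end.
have Y'l : forall v, colF G s k mf (fun u => (Y'i u)%:~R) (inl v) = colF G s k mf l (inl v).
  move=> v.
  have -> : colF G s k mf l (inl v) = colF G s k mf (fun u => (Yi u)%:~R) (inl v).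
    by rewrite colY cl subr0.
  rewrite !colF_inl ych_zero // mulr0 addr0 ych_cast.
  change (ychI G s Yi 1) with Y1.
  have -> : \sum_(y < rg_n G) ((fun u => (Y'i u)%:~R) (inl y) : rat) * (gbar_form G y v)%:~R
     = \sum_(y < rg_n G) (Yi (inl y))%:~R * (gbar_form G y v)%:~R
       - Y1%:~R * \sum_(y < rg_n G) (mv y)%:~R * (gbar_form G y v)%:~R.
    rewrite mulr_sumr -sumrB; apply: eq_bigr => y _; rewrite /= intrB intrM; ring.
  rewrite hmvr; ring.
have Y'r : forall j : 'I_s, colF G s k mf (fun u => (Y'i u)%:~R) (inr j)
    = if nat_of_ord j == 0%N then (Y'i (inl v0))%:~R else 0.
  have wz : forall t, (0 < t)%N -> wvI G s Y'i v0 t = 0.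
    by case=> // t _; rewrite /wvI; exact: ychI_zero.
  move=> j; rewrite (colF_inr_int G s k mf v0 hv0) /Ei.
  case: j => [[|j] hj] /=.
  - by rewrite (wz 1%N) // (wz 2%N) // mulr0 subr0 addr0 /wvI.
  - by rewrite (wz j.+1) // (wz j.+2) // (wz j.+3) // mulr0 subr0 addr0.
have Y'0 : 0 <= Y'i (inl v0).
  case: (lerP 0 (Y'i (inl v0))) => // hneg.
  have hy := hminl (fun u => l u + (Y'i u)%:~R) _ _ (inl v0).
  have : l (inl v0) <= l (inl v0) + (Y'i (inl v0))%:~R.
    apply: hy.
    - by exists (fun u => zl u + Y'i u) => u; rewrite hzl intrD; ring.
    - apply/SQ => v.
      rewrite (colF_lin G s k mf _ l (fun u => (Y'i u)%:~R) 1 1 v); last by move=> u; rewrite !mul1r.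
      rewrite !mul1r; case: v => [x|j].
      + rewrite Y'l; have := lSQ (inl x); lra.
      + rewrite Y'r; have := lSQ (inr j); case: ifP => _ h.
        * have : ((Y'i (inl v0))%:~R : rat) < 0 by rewrite ltrz0.
          lra.
        * lra.
  rewrite -subr_ge0 addrC addKr ler0z => h; lia.
have w0 : mf * wvI G s Yi v0 1 <= wvI G s Yi v0 0.
  have e : Y'i (inl v0) = wvI G s Yi v0 0 - Y1 * mf.
    by rewrite /= -hmv0.
  move: Y'0; rewrite e; rewrite /Y1; lia.
have Yz := chainY H (wvI G s Yi v0) wYs wY0 w0 EY.
have Lval : forall j : 'I_s, colF G s k mf l (inr j) = - (aa k s a (nat_of_ord j).+1)%:~R.
  move=> j; have := colF_inr_int G s k mf v0 hv0 Yi j.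
  rewrite colY cr /Ei (Yz j) ?(Yz j.+1) //; last by have := ltn_ord j; lia.
  have -> : wvI G s Yi v0 (nat_of_ord j).+2 = 0.
    case: (ltnP (nat_of_ord j).+1 s) => h; first by rewrite Yz.
    have -> : (nat_of_ord j).+1 = s by have := ltn_ord j; lia.
    exact: wYs.
  rewrite /= mulr0 subr0 addr0 => e; lra.
pose zi (u : nat -> int) (v : Vtx G s) : int :=
  match v with inl x => if val x == rg_last G then i%:Z else 0 | inr t => u (val t).+1 end.
have zcast : forall u v, zcyc G s i u v = (zi u v)%:~R.
  move=> u [x|t] //=; rewrite /zcyc /zi; case: ifP => //.
have key : forall u t (ht : (t < s)%N),
    bform G s k mf (fun v => zcyc G s i u v + l v) (bchain G s t.+1)
    = (Ei (kint k mf) (wvI G s (zi u) v0) t.+1 - aa k s a t.+1)%:~R.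
  move=> u t ht.
  have -> : bform G s k mf (fun v => zcyc G s i u v + l v) (bchain G s t.+1)
      = colF G s k mf (fun v => zcyc G s i u v + l v) (inr (Ordinal ht)).
    exact: (bform_bchain G s k mf _ (Ordinal ht)).
  rewrite (colF_lin G s k mf _ (fun v => (zi u v)%:~R) l 1 1 (inr (Ordinal ht))); last first.
    by move=> v; rewrite zcast !mul1r.
  rewrite (colF_inr_int G s k mf v0 hv0) Lval /= intrB; ring.
have wz0 : forall u, wvI G s (zi u) v0 0 = i%:Z.
  by move=> u; rewrite /wvI /= eqxx.
have wzt : forall u t, (1 <= t <= s)%N -> wvI G s (zi u) v0 t = u t.
  by move=> u [|t] // /andP[_ ht]; rewrite /wvI (ychI_in _ _ _ _ ht).
have wzs : forall u, wvI G s (zi u) v0 s.+1 = 0.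
  by move=> u; rewrite /wvI ychI_out.
have B0 : 0 < p%:Z + q%:Z * mf.
  have : (0 < p%:Z) by rewrite ltz_nat.
  have : 0 <= q%:Z * mf by rewrite mulr_ge0.
  lia.
have hs1 : (1 <= 1 <= s)%N by lia.
split.
-
  pose u := useq k s p q mf a i.
  have u1 : u 1%N = u1bound p q mf a i by [].
  have uj : forall j, (2 <= j)%N -> u j = ubound k s a j (u j.-1).
    by case=> [|[|j]].
  have [c1 c2] := ceil_div ((i * q)%N%:Z - a) _ B0.
  have cj : forall j, (2 <= j <= s)%N ->
      u j.-1 * nn k j.+1 s - aprime k s a j <= u j * nn k j s
      /\ u j * nn k j s < u j.-1 * nn k j.+1 s - aprime k s a j + nn k j s.
    move=> j hj; have Nj : 0 < nn k j s by apply: Npos; lia.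
    have [d1 d2] := ceil_div (u j.-1 * nn k j.+1 s - aprime k s a j) _ Nj.
    rewrite (uj j); last by lia.
    by split.
  have upos : forall t, (1 <= t <= s)%N -> 0 <= u t.
    elim=> [|t IH] // /andP[_ ts].
    case: (posnP t) => t0.
    + subst t; rewrite u1; move: c1; rewrite -/(u1bound p q mf a i) => c1.
      have : (0 <= (i * q)%N%:Z) by [].
      nia.
    + have [e1 _] := cj t.+1 (ltac:(lia)).
      have IHt : 0 <= u t by apply: IH; lia.
      have := apb t.+1 (ltac:(lia)); move=> /andP[_ apl].
      have Nt : 0 < nn k t.+2 s by apply: Npos; lia.
      have Nt1 : 0 < nn k t.+1 s by apply: Npos; lia.
      move: e1 => /= e1.
      nia.
  split.
  + move=> [x|t].
    * by rewrite zcast /zi; case: ifP => _; rewrite ler0z.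
    * rewrite zcast ler0z; apply: (upos (nat_of_ord t).+1); have := ltn_ord t; lia.
  + move=> [|t] // /andP[_ ht].
    rewrite key // lerz0.
    have A := chainA H (wvI G s (zi u) v0) (wzs u).
    rewrite subr_le0; apply: A; last by lia.
    * rewrite wz0 (wzt u 1%N hs1).
      have c1' : (i * q)%N%:Z - a <= u 1%N * (p%:Z + q%:Z * mf) := c1.
      have c2' : u 1%N * (p%:Z + q%:Z * mf) < (i * q)%N%:Z - a + (p%:Z + q%:Z * mf) := c2.
      rewrite PoszM in c1' c2'.
      apply/andP; split; nia.
    * move=> j hj; rewrite !wzt; [|lia|lia].
      have [e1 e2] := cj j hj; apply/andP; split; nia.
-
  move=> ub _ hb.
  have hE : forall t, (1 <= t <= s)%N -> Ei (kint k mf) (wvI G s (zi ub) v0) t <= aa k s a t.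
    move=> [|t] // /andP[_ ht]; have := hb t.+1 (ltac:(lia)).
    by rewrite key // lerz0 subr_le0.
  have [hb1 hbj] := chainB H (wvI G s (zi ub) v0) (wzs ub) hE.
  split.
  + rewrite /u1bound; apply: ceil_div_le => //.
    move: hb1; rewrite wz0 (wzt ub 1%N hs1) PoszM; nia.
  + move=> j hj; rewrite /ubound; apply: ceil_div_le; first by apply: Npos; lia.
    have := hbj j hj; rewrite !wzt; [nia|lia|lia].
Qed.
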